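(* Let $1<p<\infty$ and $\eta(y)=y/(1-y)$ for $y\in(0,1)$. (a) If $a\in SO(\mathbb{R}_+)$, then $a\circ\eta\in SO(\mathbb{I})$. (b) If $\alpha\in SOS(\mathbb{R}_+)$, then $\widetilde\alpha:=\eta^{-1}\circ\alpha\circ\eta\in SOS(\mathbb{I})$, the function $c_{\alpha,p}(y):=\big(\frac{1-\widetilde\alpha(y)}{1-y}\big)^{2/p}$, $y\in\mathbb{I}$, belongs to $SO(\mathbb{I})$, and \[ 0<\inf_{y\in\mathbb{I}}c_{\alpha,p}(y)\le\sup_{y\in\mathbb{I}}c_{\alpha,p}(y)<+\infty. \]
   Context: $\mathbb{R}_+=(0,\infty)$, $\mathbb{I}=(0,1)$; $\eta^{-1}(t)=t/(1+t)$. $C_b(X)$: bounded continuous complex functions on $X$. $\operatorname{osc}(f,[\lambda r,r]):=\sup\{|f(t)-f(\tau)|:t,\tau\in[\lambda r,r]\}$. $SO(\mathbb{R}_+)$: $f\in C_b(\mathbb{R}_+)$ with $\lim_{r\to s}\operatorname{osc}(f,[\lambda r,r])=0$ for $s\in\{0,\infty\}$ and each (equivalently some) $\lambda\in(0,1)$. $SO(\mathbb{I})$: $\varphi\in C_b(\mathbb{I})$ such that $\lim_{r\to0}\operatorname{osc}(\varphi,[\lambda r,r])=0$ and $\lim_{r\to0}\operatorname{osc}(\varphi(1-\cdot),[\lambda r,r])=0$ for each (equivalently some) $\lambda\in(0,1)$. $SOS(\mathbb{R}_+)$: orientation-preserving diffeomorphisms $\alpha$ of $\mathbb{R}_+$ onto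 itself with no fixed points in $\mathbb{R}_+$, $\log\alpha'\in C_b(\mathbb{R}_+)$, $\alpha'\in SO(\mathbb{R}_+)$. $SOS(\mathbb{I})$: orientation-preserving diffeomorphisms of $\mathbb{I}$ onto itself with no fixed points in $\mathbb{I}$ (only fixed points $0,1$), with $\log\alpha'\in C_b(\mathbb{I})$ and $\alpha'\in SO(\mathbb{I})$. *)

(* Defs.v *)
From Stdlib Require Import Reals Lra.
From Coquelicot Require Import Coquelicot.
Open Scope R_scope.

Definition Rplus_set (x : R) : Prop := 0 < x.
Definition I_set (x : R) : Prop := 0 < x < 1.

Definition eta (y : R) : R := y / (1 - y).
Definition eta_inv (t : R) : R := t / (1 + t).

Definition Cb (D : R -> Prop) (f : R -> C) : Prop :=
  (forall x, D x -> continuous f x) /\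
  (exists M : R, forall x, D x -> Cmod (f x) <= M).

Definition osc (f : R -> C) (lam r : R) : Rbar :=
  Lub_Rbar (fun z => exists t tau, lam * r <= t <= r /\ lam * r <= tau <= r /\
                                   z = Cmod (f t - f tau)).

Definition osc_to0_at0 (f : R -> C) (lam : R) : Prop :=
  forall eps : R, 0 < eps -> exists delta : R, 0 < delta /\
    forall r, 0 < r < delta -> Rbar_le (osc f lam r) (Finite eps).

Definition osc_to0_atoo (f : R -> C) (lam : R) : Prop :=
  forall eps : R, 0 < eps -> exists N : R,
    forall r, N < r -> Rbar_le (osc f lam r) (Finite eps).

Definition SO_Rplus (f : R -> C) : Prop :=
  Cb Rplus_set f /\
  (forall lam, 0 < lam < 1 -> osc_to0_at0 f lam /\ osc_to0_atoo f lam).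

Definition SO_I (phi : R -> C) : Prop :=
  Cb I_set phi /\
  (forall lam, 0 < lam < 1 ->
     osc_to0_at0 phi lam /\ osc_to0_at0 (fun x => phi (1 - x)) lam).

Definition orient_diffeo (D : R -> Prop) (alpha : R -> R) : Prop :=
  (forall x, D x -> D (alpha x)) /\
  (forall y, D y -> exists x, D x /\ alpha x = y) /\
  (forall x y, D x -> D y -> x < y -> alpha x < alpha y) /\
  (forall x, D x -> ex_derive alpha x) /\
  (forall x, D x -> continuous (Derive alpha) x) /\
  (exists beta : R -> R,
     (forall y, D y -> D (beta y) /\ alpha (beta y) = y) /\
     (forall x, D x -> beta (alpha x) = x) /\
     (forall y, D y -> ex_derive beta y) /\
     (forall y, D y -> continuous (Derive beta) y)).

Definition no_fixed_points (D : R -> Prop) (alpha : R -> R) : Prop :=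
  forall x, D x -> alpha x <> x.

Definition SOS (D : R -> Prop) (SO : (R -> C) -> Prop) (alpha : R -> R) : Prop :=
  orient_diffeo D alpha /\ no_fixed_points D alpha /\
  Cb D (fun x => RtoC (ln (Derive alpha x))) /\
  SO (fun x => RtoC (Derive alpha x)).

Definition SOS_Rplus := SOS Rplus_set SO_Rplus.
Definition SOS_I := SOS I_set SO_I.

Definition alpha_tilde (alpha : R -> R) (y : R) : R := eta_inv (alpha (eta y)).

Definition c_alpha_p (alpha : R -> R) (p : R) (y : R) : R :=
  Rpower ((1 - alpha_tilde alpha y) / (1 - y)) (2 / p).

Definition range_on (D : R -> Prop) (f : R -> R) : R -> Prop :=
  fun z => exists y, D y /\ z = f y.

(* Main.v *)
Require Import Defs.
From Stdlib Require Import Reals Lra.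
From Coquelicot Require Import Coquelicot.
Open Scope R_scope.

Lemma Cmod_RtoC_minus a b : Cmod ((RtoC a - RtoC b)%C) = Rabs (a - b).
Proof. rewrite <- RtoC_minus. apply Cmod_R. Qed.

Lemma osc_le f lam r eps :
  (forall t tau, lam*r<=t<=r -> lam*r<=tau<=r -> Cmod ((f t - f tau)%C) <= eps) ->
  Rbar_le (osc f lam r) (Finite eps).
Proof.
  intros H. unfold osc.
  match goal with |- Rbar_le (Lub_Rbar ?E) _ => destruct (Lub_Rbar_correct E) as [_ Hl] end.
  apply Hl. intros z [t [tau [H1 [H2 ->]]]]. simpl. apply H; auto.
Qed.

Lemma osc_use f lam r eps :
  Rbar_le (osc f lam r) (Finite eps) ->
  forall t tau, lam*r<=t<=r -> lam*r<=tau<=r -> Cmod ((f t - f tau)%C) <= eps.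
Proof.
  intros H t tau H1 H2. unfold osc in H.
  match type of H with Rbar_le (Lub_Rbar ?E) _ => destruct (Lub_Rbar_correct E) as [Hu _] end.
  assert (Hz : Rbar_le (Finite (Cmod ((f t - f tau)%C))) (Lub_Rbar (fun z => exists t tau, lam * r <= t <= r /\ lam * r <= tau <= r /\
                                   z = Cmod (f t - f tau)))).
  { apply Hu. exists t, tau. auto. }
  exact (Rbar_le_trans _ _ _ Hz H).
Qed.

Definition evf (z : bool) (Q : R -> Prop) : Prop :=
  if z then (exists d, 0 < d /\ forall r, 0 < r < d -> Q r)
  else (exists N, forall r, N < r -> Q r).

Lemma evf_and z (Q1 Q2 : R -> Prop) : evf z Q1 -> evf z Q2 -> evf z (fun r => Q1 r /\ Q2 r).
Proof.
  destruct z; simpl.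
  - intros [d1 [Hd1 H1]] [d2 [Hd2 H2]]. exists (Rmin d1 d2). split.
    + apply Rmin_pos; auto.
    + intros r Hr. split; [apply H1|apply H2]; pose proof (Rmin_l d1 d2); pose proof (Rmin_r d1 d2); lra.
  - intros [N1 H1] [N2 H2]. exists (Rmax N1 N2). intros r Hr.
    pose proof (Rmax_l N1 N2); pose proof (Rmax_r N1 N2). split; [apply H1|apply H2]; lra.
Qed.

Lemma evf_mono z (Q1 Q2 : R -> Prop) : (forall r, Q1 r -> Q2 r) -> evf z Q1 -> evf z Q2.
Proof.
  destruct z; simpl.
  - intros H [d [Hd H1]]. exists d. split; auto.
  - intros H [N H1]. exists N. auto.
Qed.

Lemma evf_pos z : evf z (fun r => 0 < r).
Proof.
  destruct z; simpl.
  - exists 1. split; [lra|]. intros r Hr; lra.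
  - exists 0. auto.
Qed.

Definition CSO (z : bool) (f : R -> C) : Prop :=
  forall lam, 0 < lam < 1 -> forall eps, 0 < eps -> evf z (fun r =>
    forall t tau, lam*r<=t<=r -> lam*r<=tau<=r -> Cmod ((f t - f tau)%C) <= eps).

Definition RSO (z : bool) (f : R -> R) : Prop :=
  forall lam, 0 < lam < 1 -> forall eps, 0 < eps -> evf z (fun r =>
    forall t tau, lam*r<=t<=r -> lam*r<=tau<=r -> Rabs (f t - f tau) <= eps).

Lemma RSO_CSO z f : RSO z f -> CSO z (fun x => RtoC (f x)).
Proof.
  intros H lam Hl eps He. refine (evf_mono z _ _ _ (H lam Hl eps He)).
  intros r Hr t tau H1 H2. rewrite Cmod_RtoC_minus. auto.
Qed.

Lemma CSO_RSO z f : CSO z (fun x => RtoC (f x)) -> RSO z f.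
Proof.
  intros H lam Hl eps He. refine (evf_mono z _ _ _ (H lam Hl eps He)).
  intros r Hr t tau H1 H2. rewrite <- Cmod_RtoC_minus. auto.
Qed.

Lemma CSO0_osc f : CSO true f -> forall lam, 0<lam<1 -> osc_to0_at0 f lam.
Proof.
  intros H lam Hl eps He. destruct (H lam Hl eps He) as [d [Hd Hr]].
  exists d. split; auto. intros r Hr'. apply osc_le. apply Hr; auto.
Qed.

Lemma osc_CSO0 f : (forall lam, 0<lam<1 -> osc_to0_at0 f lam) -> CSO true f.
Proof.
  intros H lam Hl eps He. destruct (H lam Hl eps He) as [d [Hd Hr]].
  exists d. split; auto. intros r Hr'. apply osc_use. apply Hr; auto.
Qed.

Lemma osc_CSOoo f : (forall lam, 0<lam<1 -> osc_to0_atoo f lam) -> CSO false f.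
Proof.
  intros H lam Hl eps He. destruct (H lam Hl eps He) as [N Hr].
  exists N. intros r Hr'. apply osc_use. apply Hr; auto.
Qed.

Lemma SO_Rplus_elim f : SO_Rplus f -> Cb Rplus_set f /\ CSO true f /\ CSO false f.
Proof.
  intros [Hc Ho]. split; [auto|split].
  - apply osc_CSO0. intros lam Hl; apply Ho; auto.
  - apply osc_CSOoo. intros lam Hl; apply Ho; auto.
Qed.

Lemma SO_I_intro f : Cb I_set f -> CSO true f -> CSO true (fun x => f (1 - x)) -> SO_I f.
Proof.
  intros Hc H0 H1. split; auto. intros lam Hl. split; apply CSO0_osc; auto.
Qed.


Lemma cont_RtoC (f : R -> R) x : continuous f x -> continuous (fun y => RtoC (f y)) x.
Proof.
  intros H. apply filterlim_locally. intros eps.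
  generalize (proj1 (filterlim_locally _ _) H eps). apply filter_imp.
  intros y Hy. split; simpl; auto. apply ball_center.
Qed.

Lemma cont_RtoC_inv (f : R -> R) x : continuous (fun y => RtoC (f y)) x -> continuous f x.
Proof.
  intros H. apply filterlim_locally. intros eps.
  generalize (proj1 (filterlim_locally _ _) H eps). apply filter_imp.
  intros y [Hy _]. exact Hy.
Qed.

Lemma cont_mult (f g : R -> R) x : continuous f x -> continuous g x -> continuous (fun y => f y * g y) x.
Proof. intros; apply (continuous_mult f g); auto. Qed.
Lemma cont_plus (f g : R -> R) x : continuous f x -> continuous g x -> continuous (fun y => f y + g y) x.
Proof. intros; apply (continuous_plus f g); auto. Qed.
Lemma cont_inv (f : R -> R) x : continuous f x -> f x <> 0 -> continuous (fun y => / f y) x.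
Proof. intros; apply continuous_Rinv_comp; auto. Qed.
Lemma cont_id x : continuous (fun y : R => y) x.
Proof. apply continuous_id. Qed.
Lemma cont_cst (c : R) x : continuous (fun _ : R => c) x.
Proof. apply continuous_const. Qed.

Lemma ball_R (x e y : R) : ball x e y <-> Rabs (y - x) < e.
Proof. reflexivity. Qed.

Lemma locally_I y : I_set y -> locally y I_set.
Proof.
  intros [H1 H2]. assert (Hp : 0 < Rmin y (1-y)) by (apply Rmin_pos; lra).
  exists (mkposreal _ Hp). intros z Hz. apply ball_R in Hz. change (pos (mkposreal _ Hp)) with (Rmin y (1-y)) in Hz.
  pose proof (Rmin_l y (1-y)); pose proof (Rmin_r y (1-y)).
  destruct (Rabs_def2 _ _ Hz). change (minus z y) with (z - y) in *. unfold I_set; split; lra.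
Qed.

Lemma locally_Rp y : 0 < y -> locally y Rplus_set.
Proof.
  intros H1. exists (mkposreal _ H1). intros z Hz. apply ball_R in Hz. simpl in Hz.
  destruct (Rabs_def2 _ _ Hz). change (minus z y) with (z - y) in *. unfold Rplus_set; lra.
Qed.

Lemma cont_eta y : y <> 1 -> continuous eta y.
Proof.
  intros H. unfold eta. apply cont_mult. apply cont_id.
  apply cont_inv. apply cont_plus. apply cont_cst.
  apply (continuous_opp (fun y:R => y)). apply cont_id. lra.
Qed.


Lemma eta_bounds lam r t : 0 < lam < 1 -> 0 < r <= 1/2 -> lam * r <= t <= r ->
  0 < eta r /\ eta r <= 2 * r /\ lam / 2 * eta r <= eta t /\ eta t <= eta r.
Proof.
  intros Hl Hr Ht. unfold eta. unfold Rdiv.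
  assert (Ht0 : 0 < t) by nra.
  assert (Hu : (1 - t) * / (1 - t) = 1) by (field; lra).
  assert (Hv : (1 - r) * / (1 - r) = 1) by (field; lra).
  assert (Hu0 : 0 < / (1 - t)) by (apply Rinv_0_lt_compat; lra).
  assert (Hv0 : 0 < / (1 - r)) by (apply Rinv_0_lt_compat; lra).
  assert (Huv : / (1 - t) <= / (1 - r)) by (apply Rinv_le_contravar; lra).
  assert (Hv2 : / (1 - r) <= 2) by nra.
  assert (Hu1 : 1 <= / (1 - t)) by nra.
  repeat split; nra.
Qed.

Lemma eta1 x : 0 < x -> eta (1 - x) = / x - 1.
Proof. intros H. unfold eta. field. lra. Qed.

Lemma eta_CSO0 a : CSO true a -> CSO true (fun y => a (eta y)).
Proof.
  intros H lam Hl eps He.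
  destruct (H (lam/2) ltac:(lra) eps He) as [d [Hd Hr]].
  exists (Rmin (1/2) (d/2)). split. apply Rmin_pos; lra.
  intros r Hr' t tau Ht Htau.
  pose proof (Rmin_l (1/2) (d/2)); pose proof (Rmin_r (1/2) (d/2)).
  destruct (eta_bounds lam r t Hl ltac:(lra) Ht) as [A1 [A2 [A3 A4]]].
  destruct (eta_bounds lam r tau Hl ltac:(lra) Htau) as [_ [_ [B3 B4]]].
  apply (Hr (eta r)); lra.
Qed.

Lemma eta_CSO1 a : CSO false a -> CSO true (fun x => a (eta (1 - x))).
Proof.
  intros H lam Hl eps He.
  destruct (H (lam/2) ltac:(lra) eps He) as [N Hr].
  assert (HN : 0 < / (Rabs N + 2)) by (apply Rinv_0_lt_compat; pose proof (Rabs_pos N); lra).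
  exists (Rmin (1/2) (/ (Rabs N + 2))). split. apply Rmin_pos; lra.
  intros r Hr' t tau Ht Htau.
  pose proof (Rmin_l (1/2) (/ (Rabs N + 2))); pose proof (Rmin_r (1/2) (/ (Rabs N + 2))).
  assert (Hr0 : 0 < r) by lra.
  assert (Hlr : 0 < lam * r) by nra.
  assert (Ht0 : 0 < t) by lra. assert (Htau0 : 0 < tau) by lra.
  rewrite (eta1 t Ht0), (eta1 tau Htau0).
  assert (Hil : lam * / lam = 1) by (field; lra).
  assert (Hil0 : 0 < / lam) by (apply Rinv_0_lt_compat; lra).
  assert (Hil1 : 1 <= / lam) by nra.
  assert (Hu : r * / r = 1) by (field; lra).
  assert (Hu0 : 0 < / r) by (apply Rinv_0_lt_compat; lra).
  assert (Hu2 : 2 <= / r) by nra.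
  assert (HuN : Rabs N + 2 < / r).
  { rewrite <- (Rinv_inv (Rabs N + 2)). apply Rinv_lt_contravar. nra. lra. }
  pose proof (Rle_abs N).
  assert (Hinvlr : / (lam * r) = / lam * / r) by (field; lra).
  assert (Hw1 : / r <= / t) by (apply Rinv_le_contravar; lra).
  assert (Hw2 : / t <= / (lam * r)) by (apply Rinv_le_contravar; lra).
  assert (Hw3 : / r <= / tau) by (apply Rinv_le_contravar; lra).
  assert (Hw4 : / tau <= / (lam * r)) by (apply Rinv_le_contravar; lra).
  rewrite Hinvlr in Hw2, Hw4.
  assert (HR : / r <= / lam * / r) by nra.
  apply (Hr (/ lam * / r - 1)).
  - lra.
  - split; [|lra]. assert (lam / 2 * (/ lam * / r - 1) = / r / 2 - lam / 2) by (field; lra). lra.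
  - split; [|lra]. assert (lam / 2 * (/ lam * / r - 1) = / r / 2 - lam / 2) by (field; lra). lra.
Qed.

Lemma eta_pos y : I_set y -> 0 < eta y.
Proof. intros [H1 H2]. unfold eta. apply Rdiv_lt_0_compat; lra. Qed.

Lemma eta_Cb a : Cb Rplus_set a -> Cb I_set (fun y => a (eta y)).
Proof.
  intros [Hc [M HM]]. split.
  - intros x Hx. apply (continuous_comp eta a). apply cont_eta. destruct Hx; lra.
    apply Hc. apply eta_pos; auto.
  - exists M. intros x Hx. apply HM. apply eta_pos; auto.
Qed.

Lemma SO_I_of a : Cb Rplus_set a -> CSO true a -> CSO false a -> SO_I (fun y => a (eta y)).
Proof.
  intros Hc H0 H1. apply SO_I_intro.
  - apply eta_Cb; auto.
  - apply eta_CSO0; auto.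
  - apply (eta_CSO1 a H1).
Qed.

Lemma CSO0_ext f g : (forall t, 0 < t < 1 -> f t = g t) -> CSO true f -> CSO true g.
Proof.
  intros E H lam Hl eps He. destruct (H lam Hl eps He) as [d [Hd Hr]].
  exists (Rmin d 1). split. apply Rmin_pos; lra.
  intros r Hr' t tau Ht Htau.
  pose proof (Rmin_l d 1); pose proof (Rmin_r d 1).
  assert (0 < lam * r) by nra.
  rewrite <- (E t), <- (E tau) by lra. apply (Hr r); auto; lra.
Qed.

Lemma SO_I_ext f g : (forall y, I_set y -> f y = g y) -> SO_I f -> SO_I g.
Proof.
  intros E [[Hc [M HM]] Ho].
  assert (H0 : CSO true f) by (apply osc_CSO0; intros lam Hl; apply Ho; auto).
  assert (H1 : CSO true (fun x => f (1 - x))) by (apply osc_CSO0; intros lam Hl; apply Ho; auto).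
  apply SO_I_intro.
  - split.
    + intros x Hx. apply (continuous_ext_loc g f x).
      * generalize (locally_I x Hx). apply filter_imp. intros; auto.
      * apply Hc; auto.
    + exists M. intros x Hx. rewrite <- E; auto.
  - apply (CSO0_ext f g); [intros t Ht; apply E; unfold I_set; lra | exact H0].
  - apply (CSO0_ext (fun x => f (1 - x)) (fun x => g (1 - x))); [intros t Ht; apply E; unfold I_set; lra | exact H1].
Qed.


Lemma RSO_mult z f g B : (forall x, 0 < x -> Rabs (f x) <= B) -> (forall x, 0 < x -> Rabs (g x) <= B) ->
  RSO z f -> RSO z g -> RSO z (fun x => f x * g x).
Proof.
  intros Bf Bg Hf Hg lam Hl eps He.
  assert (HB : 0 <= B) by (pose proof (Bf 1 ltac:(lra)); pose proof (Rabs_pos (f 1)); lra).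
  assert (He' : 0 < eps / (2 * (B + 1))) by (apply Rdiv_lt_0_compat; lra).
  generalize (evf_and z _ _ (evf_pos z) (evf_and z _ _ (Hf lam Hl _ He') (Hg lam Hl _ He'))).
  apply evf_mono. intros r [Hr [H1 H2]] t tau Ht Htau.
  assert (0 < lam * r) by nra.
  replace (f t * g t - f tau * g tau) with (f t * (g t - g tau) + g tau * (f t - f tau)) by ring.
  eapply Rle_trans. apply Rabs_triang. rewrite !Rabs_mult.
  pose proof (H1 t tau Ht Htau). pose proof (H2 t tau Ht Htau).
  pose proof (Bf t ltac:(lra)). pose proof (Bg tau ltac:(lra)).
  pose proof (Rabs_pos (f t)). pose proof (Rabs_pos (g tau)).
  pose proof (Rabs_pos (g t - g tau)). pose proof (Rabs_pos (f t - f tau)).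
  assert (E : eps = 2 * (B + 1) * (eps / (2 * (B + 1)))) by (field; lra).
  set (e := eps / (2 * (B + 1))) in *. rewrite E. nra.
Qed.

Lemma RSO_lip z f (phi : R -> R) c1 c2 L : (forall x, 0 < x -> c1 <= f x <= c2) ->
  (forall u v, c1 <= u <= c2 -> c1 <= v <= c2 -> Rabs (phi u - phi v) <= L * Rabs (u - v)) ->
  0 < L -> RSO z f -> RSO z (fun x => phi (f x)).
Proof.
  intros Bf Hphi HL Hf lam Hl eps He.
  assert (He' : 0 < eps / L) by (apply Rdiv_lt_0_compat; lra).
  generalize (evf_and z _ _ (evf_pos z) (Hf lam Hl _ He')).
  apply evf_mono. intros r [Hr H1] t tau Ht Htau.
  assert (0 < lam * r) by nra.
  eapply Rle_trans. apply Hphi; apply Bf; lra.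
  pose proof (H1 t tau Ht Htau).
  assert (E : eps = L * (eps / L)) by (field; lra). rewrite E.
  apply Rmult_le_compat_l; lra.
Qed.

Lemma RSO_close z f g :
  (forall lam, 0 < lam < 1 -> forall eps, 0 < eps -> evf z (fun r => forall t, lam * r <= t <= r -> Rabs (f t - g t) <= eps)) ->
  RSO z g -> RSO z f.
Proof.
  intros Hc Hg lam Hl eps He.
  assert (He' : 0 < eps / 3) by lra.
  generalize (evf_and z _ _ (Hc lam Hl _ He') (Hg lam Hl _ He')).
  apply evf_mono. intros r [H1 H2] t tau Ht Htau.
  pose proof (H1 t Ht). pose proof (H1 tau Htau). pose proof (H2 t tau Ht Htau).
  replace (f t - f tau) with ((f t - g t) + (g t - g tau) - (f tau - g tau)) by ring.
  unfold Rminus at 1. eapply Rle_trans. apply Rabs_triang. rewrite Rabs_Ropp.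
  eapply Rle_trans. apply Rplus_le_compat_r. apply Rabs_triang. lra.
Qed.

Lemma RSO_const z c : RSO z (fun _ => c).
Proof.
  intros lam Hl eps He. generalize (evf_pos z). apply evf_mono.
  intros r _ t tau _ _. rewrite Rminus_diag, Rabs_R0. lra.
Qed.

Lemma close_oo f g : (forall eps, 0 < eps -> exists N, forall t, N < t -> Rabs (f t - g t) <= eps) ->
  forall lam, 0 < lam < 1 -> forall eps, 0 < eps -> evf false (fun r => forall t, lam * r <= t <= r -> Rabs (f t - g t) <= eps).
Proof.
  intros H lam Hl eps He. destruct (H eps He) as [N HN].
  exists (Rabs N / lam). intros r Hr t Ht. apply HN.
  pose proof (Rle_abs N). pose proof (Rabs_pos N).
  assert (lam * (Rabs N / lam) = Rabs N) by (field; lra).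
  assert (lam * (Rabs N / lam) < lam * r) by (apply Rmult_lt_compat_l; lra). lra.
Qed.

Lemma close_0 f g : (forall eps, 0 < eps -> exists d, 0 < d /\ forall t, 0 < t < d -> Rabs (f t - g t) <= eps) ->
  forall lam, 0 < lam < 1 -> forall eps, 0 < eps -> evf true (fun r => forall t, lam * r <= t <= r -> Rabs (f t - g t) <= eps).
Proof.
  intros H lam Hl eps He. destruct (H eps He) as [d [Hd HN]].
  exists d. split; auto. intros r Hr t Ht. apply HN.
  assert (0 < lam * r) by nra. lra.
Qed.


Lemma exd_cont (f : R -> R) x : ex_derive f x -> continuous f x.
Proof. intros H. apply (ex_derive_continuous (K:=R_AbsRing) (V:=R_NormedModule)); auto. Qed.

Definition Ff (f : R -> R) (t : R) : R :=
  Derive f t * ((1 + t) / (1 + f t)) * ((1 + t) / (1 + f t)).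

Lemma conj_is_derive f y : I_set y -> 0 < f (eta y) -> ex_derive f (eta y) ->
  is_derive (alpha_tilde f) y (Ff f (eta y)).
Proof.
  intros [Hy1 Hy2] Hpos Hex.
  assert (He : is_derive eta y (/ (1 - y) ^ 2)).
  { unfold eta. auto_derive. lra. field. lra. }
  assert (Hf := Derive_correct f (eta y) Hex).
  assert (Hi : is_derive eta_inv (f (eta y)) (/ (1 + f (eta y)) ^ 2)).
  { unfold eta_inv. auto_derive. lra. field. lra. }
  pose proof (is_derive_comp f eta y _ _ Hf He) as H1.
  pose proof (is_derive_comp eta_inv (fun y => f (eta y)) y _ _ Hi H1) as H2.
  unfold alpha_tilde.
  replace (Ff f (eta y)) with (scal (scal (/ (1 - y) ^ 2) (Derive f (eta y))) (/ (1 + f (eta y)) ^ 2)).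
  exact H2.
  unfold Ff, scal; simpl; unfold mult; simpl. unfold eta in *. field. split; lra.
Qed.

Lemma conj_Derive f y : I_set y -> 0 < f (eta y) -> ex_derive f (eta y) ->
  Derive (alpha_tilde f) y = Ff f (eta y).
Proof. intros; apply is_derive_unique; apply conj_is_derive; auto. Qed.

Lemma Ff_cont f t : 0 < f t -> ex_derive f t -> continuous (Derive f) t -> continuous (Ff f) t.
Proof.
  intros Hp Hex Hc. unfold Ff, Rdiv.
  assert (Hq : continuous (fun t => (1 + t) * / (1 + f t)) t).
  { apply cont_mult. apply cont_plus. apply cont_cst. apply cont_id.
    apply cont_inv. apply cont_plus. apply cont_cst. apply exd_cont; auto. lra. }
  apply cont_mult. apply cont_mult. auto. auto. auto.
Qed.

Lemma conj_cont_Derive f y : I_set y ->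
  (forall t, 0 < t -> 0 < f t /\ ex_derive f t /\ continuous (Derive f) t) ->
  continuous (Derive (alpha_tilde f)) y.
Proof.
  intros Hy Hf.
  apply (continuous_ext_loc (Derive (alpha_tilde f)) (fun y => Ff f (eta y)) y).
  - generalize (locally_I y Hy). apply filter_imp. intros z Hz.
    destruct (Hf (eta z) (eta_pos z Hz)) as [A [B C]].
    symmetry. apply conj_Derive; auto.
  - apply (continuous_comp eta (Ff f)). apply cont_eta. destruct Hy; lra.
    destruct (Hf (eta y) (eta_pos y Hy)) as [A [B C]]. apply Ff_cont; auto.
Qed.

Lemma conj_ex_derive f y : I_set y -> 0 < f (eta y) -> ex_derive f (eta y) -> ex_derive (alpha_tilde f) y.
Proof. intros. eexists. apply conj_is_derive; eauto. Qed.


Lemma ln_nonpos x : x <= 0 -> ln x = 0.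
Proof. intros H. unfold ln. case Rlt_dec. intros r. exfalso. lra. intros _. reflexivity. Qed.

Lemma exp_le_mono a b : a <= b -> exp a <= exp b.
Proof. intros [H|H]. left; apply exp_increasing; auto. subst; lra. Qed.

Lemma cont_eps (f : R -> R) x : continuous f x -> forall eps, 0 < eps ->
  exists d, 0 < d /\ forall y, Rabs (y - x) < d -> Rabs (f y - f x) < eps.
Proof.
  intros H eps He. destruct (proj1 (filterlim_locally _ _) H (mkposreal _ He)) as [d Hd].
  exists d. split. apply cond_pos. intros y Hy. apply (Hd y). exact Hy.
Qed.

Lemma MVT_a (a : R -> R) u v : 0 < u < v -> (forall x, 0 < x -> ex_derive a x) ->
  exists c, u < c < v /\ a v - a u = Derive a c * (v - u).
Proof.
  intros Huv Hd. destruct (MVT_cor2 a (Derive a) u v) as [c [E Hc]]. lra.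
  intros c Hc. apply is_derive_Reals. apply Derive_correct. apply Hd. lra.
  exists c. split; auto.
Qed.

Lemma d_pos (a : R -> R) x :
  (forall x y, 0 < x -> 0 < y -> x < y -> a x < a y) ->
  (forall x, 0 < x -> ex_derive a x) ->
  (forall x, 0 < x -> continuous (Derive a) x) ->
  (forall x, 0 < x -> continuous (fun y => ln (Derive a y)) x) ->
  0 < x -> 0 < Derive a x.
Proof.
  intros Hinc Hd Hc Hl Hx.
  destruct (Rlt_or_le 0 (Derive a x)) as [H|H]; auto. exfalso.
  assert (Hloc : exists d, 0 < d /\ forall y, Rabs (y - x) < d -> Derive a y <= 0).
  { destruct H as [H|H].
    - destruct (cont_eps _ _ (Hc x Hx) (- Derive a x) ltac:(lra)) as [d [Hd0 Hdd]].
      exists d. split; auto. intros y Hy. specialize (Hdd y Hy).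
      destruct (Rabs_def2 _ _ Hdd). lra.
    - destruct (cont_eps _ _ (Hc x Hx) (exp (-1)) (exp_pos _)) as [d1 [Hd1 Hdd1]].
      destruct (cont_eps _ _ (Hl x Hx) 1 ltac:(lra)) as [d2 [Hd2 Hdd2]].
      exists (Rmin d1 d2). split. apply Rmin_pos; auto. intros y Hy.
      pose proof (Rmin_l d1 d2); pose proof (Rmin_r d1 d2).
      specialize (Hdd1 y ltac:(lra)). specialize (Hdd2 y ltac:(lra)).
      rewrite H in Hdd1, Hdd2. rewrite (ln_nonpos 0) in Hdd2 by lra.
      destruct (Rle_or_lt (Derive a y) 0) as [Hy'|Hy']; auto. exfalso.
      destruct (Rabs_def2 _ _ Hdd1). destruct (Rabs_def2 _ _ Hdd2).
      assert (ln (Derive a y) < ln (exp (-1))) by (apply ln_increasing; lra).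
      rewrite ln_exp in *. lra. }
  destruct Hloc as [d [Hd0 Hdd]].
  destruct (MVT_a a x (x + d/2) ltac:(lra) Hd) as [c [Hc1 Hc2]].
  assert (Derive a c <= 0) by (apply Hdd; rewrite Rabs_right; lra).
  assert (a x < a (x + d/2)) by (apply Hinc; lra). nra.
Qed.

Lemma d_bounds (a : R -> R) M0 :
  (forall x, 0 < x -> 0 < Derive a x) ->
  (forall x, 0 < x -> Rabs (ln (Derive a x)) <= M0) ->
  forall x, 0 < x -> exp (- M0) <= Derive a x <= exp M0.
Proof.
  intros Hp Hb x Hx. specialize (Hp x Hx). specialize (Hb x Hx).
  rewrite <- (exp_ln _ Hp). pose proof (Rle_abs (ln (Derive a x))).
  pose proof (Rle_abs (- ln (Derive a x))). rewrite Rabs_Ropp in *.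
  split; apply exp_le_mono; lra.
Qed.


Lemma a_lower (a : R -> R) m M t :
  0 < m -> (forall x, 0 < x -> m <= Derive a x <= M) ->
  (forall x, 0 < x -> 0 < a x) -> (forall x, 0 < x -> ex_derive a x) ->
  0 < t -> m * t <= a t.
Proof.
  intros Hm Hdb Hmap Hd Ht.
  destruct (Rle_or_lt (m * t) (a t)) as [H|H]; auto. exfalso.
  pose proof (Hmap t Ht) as Hat.
  set (e := (m * t - a t) / (2 * m)).
  assert (He : e * (2 * m) = m * t - a t) by (unfold e; field; lra).
  assert (He0 : 0 < e) by nra. assert (Het : e < t) by nra.
  destruct (MVT_a a e t ltac:(lra) Hd) as [c [Hc E]].
  pose proof (Hdb c ltac:(lra)). pose proof (Hmap e He0).
  nra.
Qed.

Lemma a_upper (a : R -> R) m M t :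
  0 < m -> (forall x, 0 < x -> m <= Derive a x <= M) ->
  (forall x, 0 < x -> 0 < a x) -> (forall y, 0 < y -> exists x, 0 < x /\ a x = y) ->
  (forall x y, 0 < x -> 0 < y -> x < y -> a x < a y) ->
  (forall x, 0 < x -> ex_derive a x) ->
  0 < t -> a t <= M * t.
Proof.
  intros Hm Hdb Hmap Hsurj Hinc Hd Ht.
  destruct (Rle_or_lt (a t) (M * t)) as [H|H]; auto. exfalso.
  pose proof (Hmap t Ht) as Hat.
  assert (HM : m <= M) by (destruct (Hdb 1 ltac:(lra)); lra).
  pose proof (Rmin_l ((a t - M * t) / 2) (a t / 2)); pose proof (Rmin_r ((a t - M * t) / 2) (a t / 2)).
  assert (Hy0 : 0 < Rmin ((a t - M * t) / 2) (a t / 2)) by (apply Rmin_pos; lra).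
  set (y0 := Rmin ((a t - M * t) / 2) (a t / 2)) in *.
  destruct (Hsurj y0 Hy0) as [x [Hx Ex]].
  destruct (Rlt_or_le x t) as [Hxt|Hxt].
  - destruct (MVT_a a x t ltac:(lra) Hd) as [c [Hc E]].
    pose proof (Hdb c ltac:(lra)). rewrite Ex in E. assert (Derive a c * (t - x) <= M * (t - x)) by (apply Rmult_le_compat_r; lra). nra.
  - destruct Hxt as [Hxt|Hxt].
    + pose proof (Hinc t x Ht Hx Hxt). lra.
    + subst x. lra.
Qed.

Lemma h_close (a : R -> R) m M :
  0 < m -> (forall x, 0 < x -> m <= Derive a x <= M) ->
  (forall x, 0 < x -> 0 < a x) -> (forall x, 0 < x -> a x <= M * x) ->
  (forall x, 0 < x -> ex_derive a x) -> RSO false (Derive a) ->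
  forall eps, 0 < eps -> exists N, forall s, N < s -> Rabs (a s / s - Derive a s) <= eps.
Proof.
  intros Hm Hdb Hmap Hup Hd Hso eps He.
  assert (HM : m <= M) by (destruct (Hdb 1 ltac:(lra)); lra).
  assert (HU : 0 < Rmin (1/2) (eps / (4 * M))) by (apply Rmin_pos; [lra| apply Rdiv_lt_0_compat; lra]).
  pose proof (Rmin_l (1/2) (eps / (4 * M))); pose proof (Rmin_r (1/2) (eps / (4 * M))).
  assert (HMU : M * Rmin (1/2) (eps / (4 * M)) <= eps / 4).
  { assert (E : eps / 4 = M * (eps / (4 * M))) by (field; lra). rewrite E.
    apply Rmult_le_compat_l; lra. }
  set (U := Rmin (1/2) (eps / (4 * M))) in *.
  destruct (Hso U ltac:(lra) (eps/2) ltac:(lra)) as [N0 HN0].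
  exists (Rmax N0 0). intros s Hs.
  pose proof (Rmax_l N0 0); pose proof (Rmax_r N0 0).
  assert (Hs0 : 0 < s) by lra.
  assert (HUs : 0 < U * s) by nra.
  destruct (MVT_a a (U * s) s ltac:(nra) Hd) as [c [Hc E]].
  assert (Hcs := HN0 s ltac:(lra) c s ltac:(lra) ltac:(nra)).
  pose proof (Hdb c ltac:(lra)).
  pose proof (Hmap (U * s) HUs). pose proof (Hup (U * s) HUs).
  set (w := a (U * s) / s).
  assert (Ew : w * s = a (U * s)) by (unfold w; field; lra).
  assert (Hw0 : 0 < w) by nra. assert (Hw1 : w <= M * U) by nra.
  assert (Eq : a s / s - Derive a s = (Derive a c - Derive a s) - U * Derive a c + w).
  { assert (Eas : a s = Derive a c * (s - U * s) + a (U * s)) by lra.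
    unfold w. rewrite Eas. field. lra. }
  rewrite Eq. pose proof (Rle_abs (Derive a c - Derive a s)).
  pose proof (Rle_abs (-(Derive a c - Derive a s))). rewrite Rabs_Ropp in *.
  assert (U * Derive a c <= M * U) by nra.
  assert (0 <= U * Derive a c) by nra. apply Rabs_le. split; lra.
Qed.


Lemma div_le a b c d : 0 < b -> 0 < d -> a * d <= c * b -> a / b <= c / d.
Proof.
  intros Hb Hd H.
  replace (a / b) with ((a * d) * / (b * d)) by (field; lra).
  replace (c / d) with ((c * b) * / (b * d)) by (field; lra).
  apply Rmult_le_compat_r; auto. left; apply Rinv_0_lt_compat; nra.
Qed.

Definition gf (a : R -> R) (t : R) : R := (1 + t) / (1 + a t).


Lemma gf_bounds (a : R -> R) (m M : R) (Hm : 0 < m) (HmM : m <= M) (Hlow : forall x, 0 < x -> m * x <= a x) (Hup : forall x, 0 < x -> a x <= M * x) t : 0 < t -> / (1 + M) <= gf a t <= 1 + / m.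
Proof.
  intros Ht. pose proof (Hlow t Ht). pose proof (Hup t Ht). unfold gf. split.
  - replace (/ (1 + M)) with (1 / (1 + M)) by (field; lra). apply div_le; nra.
  - replace (1 + / m) with ((m + 1) / m) by (field; lra). apply div_le; nra.
Qed.

Lemma gf_RSO0 (a : R -> R) (m M : R) (Hm : 0 < m) (HmM : m <= M) (Hlow : forall x, 0 < x -> m * x <= a x) (Hup : forall x, 0 < x -> a x <= M * x) : RSO true (gf a).
Proof.
  apply (RSO_close true (gf a) (fun _ => 1)); [|apply RSO_const].
  apply close_0. intros eps He. exists (eps / (1 + M)). split.
  apply Rdiv_lt_0_compat; lra. intros t [Ht1 Ht2].
  pose proof (Hlow t Ht1). pose proof (Hup t Ht1).
  assert (Ht3 : (1 + M) * t <= eps).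
  { assert (E : eps = (1 + M) * (eps / (1 + M))) by (field; lra). rewrite E.
    apply Rmult_le_compat_l; lra. }
  apply Rabs_le. unfold gf. split.
  - assert ((1 - (1 + M) * t) / 1 <= (1 + t) / (1 + a t)) by (apply div_le; [lra|nra|]; assert (0 <= (1 + M) * t * a t) by (apply Rmult_le_pos; nra); nra). lra.
  - assert ((1 + t) / (1 + a t) <= (1 + (1 + M) * t) / 1) by (apply div_le; [nra|lra|]; assert (0 <= (1 + M) * t * a t) by (apply Rmult_le_pos; nra); nra). lra.
Qed.

Lemma inv_lip (m M : R) (Hm : 0 < m) u v : m <= u <= M -> m <= v <= M -> Rabs (/ u - / v) <= / (m * m) * Rabs (u - v).
Proof.
  intros Hu Hv.
  replace (/ u - / v) with ((u - v) * - / (u * v)) by (field; lra).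
  rewrite Rabs_mult, Rabs_Ropp, Rmult_comm. apply Rmult_le_compat_r. apply Rabs_pos.
  rewrite Rabs_right. apply Rinv_le_contravar; nra. left; apply Rinv_0_lt_compat; nra.
Qed.

Lemma gf_RSOoo (a : R -> R) (m M : R) (Hm : 0 < m) (HmM : m <= M) (Hlow : forall x, 0 < x -> m * x <= a x) (Hup : forall x, 0 < x -> a x <= M * x) : (forall x, 0 < x -> ex_derive a x) -> (forall x, 0 < x -> m <= Derive a x <= M) ->
  RSO false (Derive a) -> RSO false (gf a).
Proof.
  intros Hd Hdb Hso.
  assert (Hmap : forall x, 0 < x -> 0 < a x) by (intros x Hx; pose proof (Hlow x Hx); nra).
  assert (Hh : RSO false (fun t => a t / t)).
  { apply (RSO_close false _ (Derive a)); auto. apply close_oo.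
    apply (h_close a m M); auto. }
  assert (Hhb : forall x, 0 < x -> m <= a x / x <= M).
  { intros x Hx. pose proof (Hlow x Hx). pose proof (Hup x Hx). split.
    - replace m with ((m * x) / x) by (field; lra). apply div_le; nra.
    - replace M with ((M * x) / x) by (field; lra). apply div_le; nra. }
  assert (Hi : RSO false (fun t => / (a t / t))).
  { apply (RSO_lip false (fun t => a t / t) Rinv m M (/ (m * m))); auto.
    intros u v Hu Hv. apply (inv_lip m M); auto. apply Rinv_0_lt_compat; nra. }
  apply (RSO_close false _ (fun t => / (a t / t))); [|exact Hi].
  apply close_oo. intros eps He.
  exists ((M + 1) / (m * m * eps)). intros t Ht.
  assert (HN : 0 < (M + 1) / (m * m * eps)) by (apply Rdiv_lt_0_compat; [lra| repeat apply Rmult_lt_0_compat; lra]).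
  assert (Ht0 : 0 < t) by lra.
  pose proof (Hlow t Ht0). pose proof (Hup t Ht0).
  assert (Hat : 0 < a t) by nra.
  assert (Eq : gf a t - / (a t / t) = (a t - t) / (a t * (1 + a t))) by (unfold gf; field; lra).
  rewrite Eq.
  assert (HK : (M + 1) / (m * m * t) <= eps / 1).
  { apply div_le. repeat apply Rmult_lt_0_compat; lra. lra.
    assert (E : (M + 1) = (m * m * eps) * ((M + 1) / (m * m * eps))) by (field; lra).
    assert (0 < m * m * eps) by (repeat apply Rmult_lt_0_compat; lra).
    rewrite E at 1. nra. }
  assert (Hmt : m * t * (m * t) <= a t * (1 + a t)) by (assert (0 < m * t) by nra; assert (m * t * (m * t) <= a t * a t) by (apply Rmult_le_compat; lra); nra).
  apply Rabs_le. split.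
  - assert (- (M + 1) / (m * m * t) <= (a t - t) / (a t * (1 + a t))).
    { apply div_le. repeat apply Rmult_lt_0_compat; lra. nra. nra. }
    replace (- (M + 1) / (m * m * t)) with (- ((M + 1) / (m * m * t))) in H1 by (field; lra). lra.
  - assert ((a t - t) / (a t * (1 + a t)) <= (M + 1) / (m * m * t)).
    { apply div_le. nra. repeat apply Rmult_lt_0_compat; lra. nra. }
    lra.
Qed.



Lemma rpow_lip c1 c2 q u v : 0 < c1 -> c1 <= u <= c2 -> c1 <= v <= c2 ->
  Rabs (Rpower u q - Rpower v q) <=
  (Rabs q * exp (Rabs (q - 1) * (Rabs (ln c1) + Rabs (ln c2))) + 1) * Rabs (u - v).
Proof.
  intros Hc Hu Hv.
  destruct (MVT_abs (fun x => Rpower x q) (fun x => q * Rpower x (q - 1)) v u) as [c [E Hcb]].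
  { intros c Hcb. apply derivable_pt_lim_power.
    pose proof (Rmin_glb v u c1 ltac:(lra) ltac:(lra)). lra. }
  pose proof (Rmin_glb v u c1 ltac:(lra) ltac:(lra)).
  pose proof (Rmax_lub v u c2 ltac:(lra) ltac:(lra)).
  rewrite E, (Rabs_minus_sym u v). apply Rmult_le_compat_r. apply Rabs_pos.
  rewrite Rabs_mult. rewrite (Rabs_right (Rpower c (q - 1))) by (left; apply exp_pos).
  assert (Hlc : Rabs (ln c) <= Rabs (ln c1) + Rabs (ln c2)).
  { assert (ln c1 <= ln c) by (apply ln_le; lra). assert (ln c <= ln c2) by (apply ln_le; lra).
    pose proof (Rle_abs (ln c1)). pose proof (Rle_abs (- ln c1)). pose proof (Rle_abs (ln c2)).
    pose proof (Rle_abs (- ln c2)). rewrite Rabs_Ropp in *. apply Rabs_le. split; lra. }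
  assert (Hp : Rpower c (q - 1) <= exp (Rabs (q - 1) * (Rabs (ln c1) + Rabs (ln c2)))).
  { unfold Rpower. apply exp_le_mono. eapply Rle_trans. apply Rle_abs. rewrite Rabs_mult.
    apply Rmult_le_compat_l; auto. apply Rabs_pos. }
  pose proof (Rabs_pos q). pose proof (exp_pos ((q - 1) * ln c)).
  assert (Rabs q * Rpower c (q - 1) <= Rabs q * exp (Rabs (q - 1) * (Rabs (ln c1) + Rabs (ln c2))))
    by (apply Rmult_le_compat_l; auto). lra.
Qed.

Lemma eta_inv_I s : 0 < s -> I_set (eta_inv s).
Proof.
  intros H. unfold eta_inv, I_set. split. apply Rdiv_lt_0_compat; lra.
  replace 1 with ((1 + s) / (1 + s)) at 2 by (field; lra). apply Rmult_lt_compat_r.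
  apply Rinv_0_lt_compat; lra. lra.
Qed.

Lemma eta_eta_inv s : 0 < s -> eta (eta_inv s) = s.
Proof. intros H. unfold eta, eta_inv. field. split; lra. Qed.

Lemma eta_inv_eta y : y < 1 -> eta_inv (eta y) = y.
Proof.
  intros H. unfold eta, eta_inv.
  replace (1 + y / (1 - y)) with (/ (1 - y)) by (field; lra). field. lra.
Qed.

Lemma eta_lt x y : I_set x -> I_set y -> x < y -> eta x < eta y.
Proof.
  intros [H1 H2] [H3 H4] H.
  assert (E : eta y - eta x = (y - x) / ((1 - x) * (1 - y))) by (unfold eta; field; lra).
  assert (0 < (y - x) / ((1 - x) * (1 - y))) by (apply Rdiv_lt_0_compat; nra). lra.
Qed.

Lemma eta_inv_lt x y : 0 < x -> 0 < y -> x < y -> eta_inv x < eta_inv y.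
Proof.
  intros H1 H3 H.
  assert (E : eta_inv y - eta_inv x = (y - x) / ((1 + x) * (1 + y))) by (unfold eta_inv; field; lra).
  assert (0 < (y - x) / ((1 + x) * (1 + y))) by (apply Rdiv_lt_0_compat; nra). lra.
Qed.


Lemma part_a (a : R -> C) : SO_Rplus a -> SO_I (fun y => a (eta y)).
Proof.
  intros Ha. destruct (SO_Rplus_elim a Ha) as [Hc [H0 H1]]. apply SO_I_of; auto.
Qed.

Lemma range_bounds (f : R -> R) lo hi : 0 < lo ->
  (forall y, I_set y -> lo <= f y <= hi) ->
  Rbar_lt (Finite 0) (Glb_Rbar (range_on I_set f)) /\
  Rbar_le (Glb_Rbar (range_on I_set f)) (Lub_Rbar (range_on I_set f)) /\
  Rbar_lt (Lub_Rbar (range_on I_set f)) p_infty.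
Proof.
  intros Hlo Hb.
  destruct (Glb_Rbar_correct (range_on I_set f)) as [G1 G2].
  destruct (Lub_Rbar_correct (range_on I_set f)) as [L1 L2].
  assert (Hlb : Rbar_le (Finite lo) (Glb_Rbar (range_on I_set f))).
  { apply G2. intros x [y [Hy ->]]. simpl. apply Hb; auto. }
  assert (Hub : Rbar_le (Lub_Rbar (range_on I_set f)) (Finite hi)).
  { apply L2. intros x [y [Hy ->]]. simpl. apply Hb; auto. }
  assert (Hhalf : range_on I_set f (f (1/2))) by (exists (1/2); split; [unfold I_set; lra|auto]).
  split; [|split].
  - apply (Rbar_lt_le_trans _ (Finite lo)); auto. simpl; auto.
  - apply (Rbar_le_trans _ (Finite (f (1/2)))). apply G1; auto. apply L1; auto.
  - apply (Rbar_le_lt_trans _ (Finite hi)); auto. simpl; auto.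
Qed.

Lemma part_b (p : R) (hp : 1 < p) (alpha : R -> R) : SOS_Rplus alpha ->
     SOS_I (alpha_tilde alpha) /\
     SO_I (fun y => RtoC (c_alpha_p alpha p y)) /\
     Rbar_lt (Finite 0) (Glb_Rbar (range_on I_set (c_alpha_p alpha p))) /\
     Rbar_le (Glb_Rbar (range_on I_set (c_alpha_p alpha p)))
             (Lub_Rbar (range_on I_set (c_alpha_p alpha p))) /\
     Rbar_lt (Lub_Rbar (range_on I_set (c_alpha_p alpha p))) p_infty.
Proof.
  intros Hs.
  destruct Hs as [[Hmap [Hsurj [Hinc [Hexd [Hcd [beta [Hb1 [Hb2 [Hb3 Hb4]]]]]]]]] [Hnf [[Hlc [M0 HM0]] Hso]]].
  unfold Rplus_set in *.
  destruct (SO_Rplus_elim _ Hso) as [_ [Hd0 Hdoo]].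
  apply CSO_RSO in Hd0. apply CSO_RSO in Hdoo.
  assert (Hdpos : forall x, 0 < x -> 0 < Derive alpha x).
  { intros x Hx. apply (d_pos alpha x); auto.
    intros y Hy. apply cont_RtoC_inv. apply Hlc. exact Hy. }
  assert (HM0' : forall x, 0 < x -> Rabs (ln (Derive alpha x)) <= M0).
  { intros x Hx. rewrite <- Cmod_R. apply HM0. exact Hx. }
  pose proof (d_bounds alpha M0 Hdpos HM0') as Hdb.
  set (m := exp (- M0)) in *. set (M := exp M0) in *.
  assert (Hm : 0 < m) by apply exp_pos.
  assert (HmM : m <= M) by (destruct (Hdb 1 ltac:(lra)); lra).
  assert (Hlow : forall x, 0 < x -> m * x <= alpha x).
  { intros x Hx. apply (a_lower alpha m M); auto. }
  assert (Hup : forall x, 0 < x -> alpha x <= M * x).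
  { intros x Hx. apply (a_upper alpha m M); auto. }
  set (G1 := / (1 + M)). set (G2 := 1 + / m).
  assert (HG1 : 0 < G1) by (apply Rinv_0_lt_compat; lra).
  assert (HG2 : 0 < G2) by (pose proof (Rinv_0_lt_compat m Hm); unfold G2; lra).
  assert (Hgb : forall t, 0 < t -> G1 <= gf alpha t <= G2).
  { intros t Ht. apply (gf_bounds alpha m M); auto. }
  assert (Hg0 : RSO true (gf alpha)) by (apply (gf_RSO0 alpha m M); auto).
  assert (Hgoo : RSO false (gf alpha)) by (apply (gf_RSOoo alpha m M); auto).
  set (B := M * G2 + M + G2).
  assert (HB : 0 <= M * G2) by nra.
  assert (HdgB : forall x, 0 < x -> Rabs (Derive alpha x * gf alpha x) <= B).
  { intros x Hx. destruct (Hdb x Hx). destruct (Hgb x Hx).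
    rewrite Rabs_right by nra. unfold B. assert (Derive alpha x * gf alpha x <= M * G2) by
      (apply Rmult_le_compat; lra). lra. }
  assert (HgB : forall x, 0 < x -> Rabs (gf alpha x) <= B).
  { intros x Hx. destruct (Hgb x Hx). rewrite Rabs_right by lra. unfold B. lra. }
  assert (HdB : forall x, 0 < x -> Rabs (Derive alpha x) <= B).
  { intros x Hx. destruct (Hdb x Hx). rewrite Rabs_right by lra. unfold B. lra. }
  assert (HF : forall z, RSO z (Derive alpha) -> RSO z (gf alpha) -> RSO z (Ff alpha)).
  { intros z H1 H2.
    apply (RSO_mult z (fun t => Derive alpha t * gf alpha t) (gf alpha) B); auto.
    apply (RSO_mult z (Derive alpha) (gf alpha) B); auto. }
  assert (HFb : forall t, 0 < t -> m * G1 * G1 <= Ff alpha t <= M * G2 * G2).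
  { intros t Ht. destruct (Hdb t Ht). destruct (Hgb t Ht).
    change (Ff alpha t) with (Derive alpha t * gf alpha t * gf alpha t).
    split; repeat apply Rmult_le_compat; nra. }
  assert (Hfacts : forall t, 0 < t -> 0 < alpha t /\ ex_derive alpha t /\ continuous (Derive alpha) t).
  { intros t Ht. auto. }
  assert (HDer : forall y, I_set y -> Derive (alpha_tilde alpha) y = Ff alpha (eta y)).
  { intros y Hy. apply conj_Derive; auto; apply Hmap || apply Hexd; apply eta_pos; auto. }
  assert (HDcont : forall y, I_set y -> continuous (Derive (alpha_tilde alpha)) y).
  { intros y Hy. apply conj_cont_Derive; auto. }
  split; [|split].
  -
    split; [|split; [|split]].
    +
      split; [|split; [|split; [|split; [|split]]]].
      * intros x Hx. apply eta_inv_I. apply Hmap. apply eta_pos; auto.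
      * intros y Hy. destruct (Hsurj (eta y) (eta_pos y Hy)) as [x [Hx Ex]].
        exists (eta_inv x). split. apply eta_inv_I; auto.
        unfold alpha_tilde. rewrite eta_eta_inv by auto. rewrite Ex. apply eta_inv_eta. destruct Hy; lra.
      * intros x y Hx Hy Hxy. unfold alpha_tilde. apply eta_inv_lt.
        apply Hmap, eta_pos; auto. apply Hmap, eta_pos; auto.
        apply Hinc. apply eta_pos; auto. apply eta_pos; auto. apply eta_lt; auto.
      * intros y Hy. apply conj_ex_derive; auto. apply Hmap, eta_pos; auto. apply Hexd, eta_pos; auto.
      * exact HDcont.
      * exists (alpha_tilde beta). split; [|split; [|split]].
        -- intros y Hy. destruct (Hb1 (eta y) (eta_pos y Hy)) as [Hb Ea]. split.
           apply eta_inv_I; auto.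
           unfold alpha_tilde. rewrite eta_eta_inv by auto. rewrite Ea. apply eta_inv_eta. destruct Hy; lra.
        -- intros x Hx. unfold alpha_tilde. rewrite eta_eta_inv by (apply Hmap, eta_pos; auto).
           rewrite Hb2 by (apply eta_pos; auto). apply eta_inv_eta. destruct Hx; lra.
        -- intros y Hy. destruct (Hb1 (eta y) (eta_pos y Hy)) as [Hb Ea].
           apply conj_ex_derive; auto. apply Hb3, eta_pos; auto.
        -- intros y Hy. apply conj_cont_Derive; auto. intros t Ht.
           destruct (Hb1 t Ht). auto.
    +
      intros y Hy E. unfold alpha_tilde in E.
      assert (E2 : eta (eta_inv (alpha (eta y))) = eta y) by (rewrite E; auto).
      rewrite eta_eta_inv in E2 by (apply Hmap, eta_pos; auto).
      apply (Hnf (eta y) (eta_pos y Hy)). exact E2.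
    +
      split.
      * intros y Hy. apply cont_RtoC.
        apply (continuous_comp (Derive (alpha_tilde alpha)) ln y). auto.
        apply continuous_ln. rewrite HDer by auto.
        destruct (HFb (eta y) (eta_pos y Hy)). assert (0 < m * G1 * G1) by (repeat apply Rmult_lt_0_compat; auto). lra.
      * exists (Rabs (ln (m * G1 * G1)) + Rabs (ln (M * G2 * G2))).
        intros y Hy. rewrite Cmod_R. rewrite HDer by auto.
        destruct (HFb (eta y) (eta_pos y Hy)).
        assert (0 < m * G1 * G1) by (repeat apply Rmult_lt_0_compat; auto).
        assert (ln (m * G1 * G1) <= ln (Ff alpha (eta y))) by (apply ln_le; auto).
        assert (ln (Ff alpha (eta y)) <= ln (M * G2 * G2)) by (apply ln_le; lra).
        pose proof (Rle_abs (ln (m * G1 * G1))). pose proof (Rle_abs (- ln (m * G1 * G1))).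
        pose proof (Rle_abs (ln (M * G2 * G2))). pose proof (Rle_abs (- ln (M * G2 * G2))).
        rewrite Rabs_Ropp in *. apply Rabs_le. split; lra.
    +
      apply (SO_I_ext (fun y => RtoC (Ff alpha (eta y)))).
      { intros y Hy. rewrite HDer; auto. }
      apply (SO_I_of (fun t => RtoC (Ff alpha t))).
      * split.
        -- intros x Hx. apply cont_RtoC. apply Ff_cont; auto.
        -- exists (M * G2 * G2). intros x Hx. rewrite Cmod_R. destruct (HFb x Hx).
           rewrite Rabs_right; [lra|]. assert (0 < m * G1 * G1) by (repeat apply Rmult_lt_0_compat; auto). lra.
      * apply RSO_CSO. apply HF; auto.
      * apply RSO_CSO. apply HF; auto.
  -
    set (q := 2 / p).
    assert (Hq : 0 < q) by (unfold q; apply Rdiv_lt_0_compat; lra).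
    apply (SO_I_ext (fun y => RtoC (Rpower (gf alpha (eta y)) q))).
    { intros y Hy. unfold c_alpha_p. f_equal. fold q. f_equal.
      unfold alpha_tilde, eta_inv, gf. pose proof (Hmap (eta y) (eta_pos y Hy)).
      set (s := alpha (eta y)) in *. destruct Hy. unfold eta. field. split; lra. }
    set (L := Rabs q * exp (Rabs (q - 1) * (Rabs (ln G1) + Rabs (ln G2))) + 1).
    assert (HL : 0 < L) by (unfold L; pose proof (Rabs_pos q); pose proof (exp_pos (Rabs (q - 1) * (Rabs (ln G1) + Rabs (ln G2)))); nra).
    apply (SO_I_of (fun t => RtoC (Rpower (gf alpha t) q))).
    + split.
      * intros x Hx. apply cont_RtoC. unfold Rpower. apply continuous_exp_comp.
        apply cont_mult. apply cont_cst.
        apply (continuous_comp (gf alpha) ln x).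
        -- unfold gf, Rdiv. apply cont_mult. apply cont_plus. apply cont_cst. apply cont_id.
           apply cont_inv. apply cont_plus. apply cont_cst. apply exd_cont. auto.
           pose proof (Hmap x Hx). lra.
        -- apply continuous_ln. destruct (Hgb x Hx). lra.
      * exists (Rpower G2 q). intros x Hx. rewrite Cmod_R. rewrite Rabs_right.
        apply Rle_Rpower_l. lra. destruct (Hgb x Hx). lra.
        left. apply exp_pos.
    + apply RSO_CSO. apply (RSO_lip true (gf alpha) (fun x => Rpower x q) G1 G2 L); auto.
      intros u v Hu Hv. apply rpow_lip; auto.
    + apply RSO_CSO. apply (RSO_lip false (gf alpha) (fun x => Rpower x q) G1 G2 L); auto.
      intros u v Hu Hv. apply rpow_lip; auto.
  -
    set (q := 2 / p).
    assert (Hq : 0 < q) by (unfold q; apply Rdiv_lt_0_compat; lra).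
    apply (range_bounds _ (Rpower G1 q) (Rpower G2 q)). apply exp_pos.
    intros y Hy.
    assert (E : c_alpha_p alpha p y = Rpower (gf alpha (eta y)) q).
    { unfold c_alpha_p. fold q. f_equal.
      unfold alpha_tilde, eta_inv, gf. pose proof (Hmap (eta y) (eta_pos y Hy)).
      set (s := alpha (eta y)) in *. destruct Hy. unfold eta. field. split; lra. }
    rewrite E. destruct (Hgb (eta y) (eta_pos y Hy)).
    split; apply Rle_Rpower_l; lra.
Qed.

Theorem lemma3p3 (p : R) (hp : 1 < p) :
  (forall a : R -> C, SO_Rplus a -> SO_I (fun y => a (eta y))) /\
  (forall alpha : R -> R, SOS_Rplus alpha ->
     SOS_I (alpha_tilde alpha) /\
     SO_I (fun y => RtoC (c_alpha_p alpha p y)) /\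
     Rbar_lt (Finite 0) (Glb_Rbar (range_on I_set (c_alpha_p alpha p))) /\
     Rbar_le (Glb_Rbar (range_on I_set (c_alpha_p alpha p)))
             (Lub_Rbar (range_on I_set (c_alpha_p alpha p))) /\
     Rbar_lt (Lub_Rbar (range_on I_set (c_alpha_p alpha p))) p_infty).
Proof.
  split. apply part_a. intros alpha H. apply part_b; auto.
Qed.
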